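(* Let $T$ be a spherically homogeneous rooted tree in which every vertex has at least $2$ children, and let $G\le\mathrm{Aut}~T$ be a finitely generated branch group which contains a non-trivial element of finite order. Then $G$ does not have property $\mathrm{(LR)}$.
   Context: $\mathrm{Aut}~T$ is the group of automorphisms of $T$ fixing the root; $\mathcal{L}_n$ is the $n$th level; $T_v$ is the subtree of descendants of $v$. For $G\le\mathrm{Aut}~T$, $\mathrm{rist}_G(v)$ is the subgroup of elements of $G$ fixing every vertex outside $T_v$, and $\mathrm{Rist}_G(n)=\prod_{v\in\mathcal{L}_n}\mathrm{rist}_G(v)$. $G$ is level-transitive if it is transitive on each level; $G$ is branch if it is level-transitive and each $\mathrm{Rist}_G(n)$ has finite index in $G$. $H\le G$ is a virtual retract of $G$ if there is a finite-index $K\le G$ containing $H$ and a homomorphism $K\to H$ that is the identity on $H$; $G$ has $\mathrm{(LR)}$ if every finitely generated subgroup is a virtual retract of $G$. *)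

(* Defs.v *)
From Stdlib Require List.
From mathcomp Require Import all_boot.
Set Implicit Arguments. Unset Strict Implicit. Unset Printing Implicit Defensive.

(* Spherically homogeneous rooted tree with branching sequence [m]:
   vertices at level n are the sequences [x_0; ...; x_{n-1}] with x_i < m i;
   the root is [::], the parent of v is v with its last letter removed. *)
Definition vertex := seq nat.

Definition valid (m : nat -> nat) (v : vertex) : Prop :=
  forall i, i < size v -> nth 0 v i < m i.

Definition parent (v : vertex) : vertex := take (size v).-1 v.

Fixpoint level (m : nat -> nat) (n : nat) : seq vertex :=
  match n with
  | 0 => [:: [::]]
  | k.+1 => flatten [seq [seq rcons v i | i <- iota 0 (m k)] | v <- level m k]
  end.

(* Tree automorphisms (automatically root-fixing) are represented as functions
   on [vertex] that are the identity outside the tree. *)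
Definition afun := vertex -> vertex.

Definition idf : afun := fun v => v.

Definition is_aut (m : nat -> nat) (f : afun) : Prop :=
  [/\ (forall v, ~ valid m v -> f v = v),
      (forall v, valid m v -> valid m (f v) /\ size (f v) = size v),
      (forall v, valid m v -> f (parent v) = parent (f v))
    & bijective f].

Definition is_subgroup (m : nat -> nat) (G : afun -> Prop) : Prop :=
  [/\ (forall f, G f -> is_aut m f),
      G idf,
      (forall f g, G f -> G g -> G (f \o g))
    & (forall f g, G f -> cancel f g -> cancel g f -> G g)].

Definition subset (H G : afun -> Prop) : Prop := forall f, H f -> G f.

Inductive gen (S : afun -> Prop) : afun -> Prop :=
| gen_id : gen S idf
| gen_mul s f : S s -> gen S f -> gen S (s \o f)
| gen_inv s s' f : S s -> cancel s s' -> cancel s' s -> gen S f -> gen S (s' \o f).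

Definition fin_gen (G : afun -> Prop) : Prop :=
  exists l : seq afun, forall f, G f <-> gen (fun s => List.In s l) f.

Definition finite_index (K G : afun -> Prop) : Prop :=
  exists reps : seq afun, (forall r, List.In r reps -> G r) /\
    forall g, G g -> exists r k, List.In r reps /\ K k /\ g = k \o r.

Definition level_transitive (m : nat -> nat) (G : afun -> Prop) : Prop :=
  forall n v w, List.In v (level m n) -> List.In w (level m n) ->
    exists g, G g /\ g v = w.

Definition rist (m : nat -> nat) (G : afun -> Prop) (v : vertex) : afun -> Prop :=
  fun g => G g /\ forall w, valid m w -> ~~ prefix v w -> g w = w.

Definition Rist (m : nat -> nat) (G : afun -> Prop) (n : nat) : afun -> Prop :=
  fun g => exists h : vertex -> afun,
    (forall v, List.In v (level m n) -> rist m G v (h v)) /\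
    g = foldr (fun v acc => h v \o acc) idf (level m n).

Definition branch (m : nat -> nat) (G : afun -> Prop) : Prop :=
  level_transitive m G /\ forall n, finite_index (Rist m G n) G.

Definition virtual_retract (m : nat -> nat) (H G : afun -> Prop) : Prop :=
  exists (K : afun -> Prop) (phi : afun -> afun),
    [/\ is_subgroup m K, subset K G, subset H K & finite_index K G] /\
    [/\ (forall x, K x -> H (phi x)),
        (forall x y, K x -> K y -> phi (x \o y) = phi x \o phi y)
      & (forall h, H h -> phi h = h)].

Definition LR (m : nat -> nat) (G : afun -> Prop) : Prop :=
  forall l : seq afun, (forall s, List.In s l -> G s) ->
    virtual_retract m (gen (fun s => List.In s l)) G.

(* Main.v *)
Require Import Defs.
From mathcomp Require Import all_boot.
From Stdlib Require Import FunctionalExtensionality ClassicalEpsilon Classical_Prop.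
From Stdlib Require List.
Set Implicit Arguments. Unset Strict Implicit. Unset Printing Implicit Defensive.

Lemma inL (T : eqType) (x : T) (s : seq T) : List.In x s <-> x \in s.
Proof.
elim: s => [|y s IH] /=; first by split.
rewrite inE; split.
  by case=> [->|/IH ->]; rewrite ?eqxx ?orbT.
by case/orP=> [/eqP ->|/IH]; [left|right].
Qed.

Lemma prefix_size (a b : vertex) : prefix a b -> size a <= size b.
Proof. by move=> /prefixP [c ->]; rewrite size_cat leq_addr. Qed.

Lemma prefix_eq_size (a b : vertex) : prefix a b -> size a = size b -> a = b.
Proof. by move=> h hs; move: h; rewrite prefixE hs take_size => /eqP. Qed.

Lemma prefix_comp (a b x : vertex) : prefix a x -> prefix b x ->
  prefix a b \/ prefix b a.
Proof.
move=> ha hb; move: ha hb; rewrite prefixE => /eqP Ha; rewrite prefixE => /eqP Hb.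
case: (leqP (size a) (size b)) => h.
  left; rewrite prefixE; apply/eqP; rewrite -[in RHS]Ha -[b]Hb take_takel //.
right; rewrite prefixE; apply/eqP; rewrite -[in RHS]Hb -[a]Ha take_takel //.
exact: ltnW.
Qed.

Lemma prefix_same (a b x : vertex) : prefix a x -> prefix b x ->
  size a = size b -> a = b.
Proof.
move=> ha hb hs; case: (prefix_comp ha hb) => h.
  exact: prefix_eq_size.
by apply/esym/prefix_eq_size.
Qed.

Lemma valid_take m (w : vertex) k : valid m w -> valid m (take k w).
Proof.
move=> hw i; rewrite size_take ltn_min => /andP [hik hiw].
by rewrite nth_take //; apply hw.
Qed.

Lemma valid_prefix m (u w : vertex) : prefix u w -> valid m w -> valid m u.
Proof. by rewrite prefixE => /eqP <-; apply: valid_take. Qed.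

Lemma level_S m k : level m k.+1 = [seq rcons v i | v <- level m k, i <- iota 0 (m k)].
Proof. by []. Qed.

Lemma mem_level m n v : v \in level m n <-> size v = n /\ valid m v.
Proof.
elim: n v => [|n IH] v.
  rewrite /= inE; split; first by move/eqP ->; split=> // i.
  by case=> /eqP; rewrite size_eq0 => /eqP ->.
rewrite level_S; split.
  case/allpairsP=> [[x i] /= [hx hi ->]]; have [sx vx] := IH x; case: (sx hx) => s1 v1.
  split; first by rewrite size_rcons s1.
  move=> j; rewrite size_rcons ltnS leq_eqVlt => /orP [/eqP ->|hj].
    by rewrite nth_rcons s1 ltnn eqxx; rewrite mem_iota in hi.
  by rewrite nth_rcons hj; apply v1.
case=> hs hv; case/lastP: v hs hv => [//|x i] hs hv.
apply/allpairsP; exists (x, i) => /=; split => //.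
  apply/IH; split; first by move: hs; rewrite size_rcons => -[].
  move=> j hj; move: (hv j); rewrite nth_rcons hj size_rcons; apply; exact: ltnW.
rewrite mem_iota /= add0n; move: (hv (size x)); rewrite nth_rcons ltnn eqxx size_rcons.
have -> : size x = n by move: hs; rewrite size_rcons => -[].
by apply.
Qed.

Lemma uniq_level m n : uniq (level m n).
Proof.
elim: n => [//|n IH]; rewrite level_S allpairs_uniq ?iota_uniq //.
by move=> [x i] [y j] _ _ /= /rcons_inj [-> ->].
Qed.

Lemma size_level m n : (forall i, 2 <= m i) -> 2 ^ n <= size (level m n).
Proof.
move=> hm; elim: n => [//|n IH]; rewrite level_S size_allpairs size_iota expnSr.
exact: leq_mul.
Qed.

Section Aut.
Variable m : nat -> nat.

Lemma aut_inj f : is_aut m f -> injective f.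
Proof. by case=> _ _ _ /bij_inj. Qed.

Lemma aut_fix f v : is_aut m f -> ~ valid m v -> f v = v.
Proof. by case=> h _ _ _; apply: h. Qed.

Lemma aut_valid f v : is_aut m f -> valid m v -> valid m (f v).
Proof. by case=> _ h _ _ /h []. Qed.

Lemma aut_size f v : is_aut m f -> size (f v) = size v.
Proof.
move=> hf; case: (classic (valid m v)) => hv.
  by case: hf => _ h _ _; case: (h _ hv).
by rewrite aut_fix.
Qed.

Lemma aut_take_aux f w : is_aut m f -> valid m w -> forall d k, k + d = size w ->
  f (take k w) = take k (f w).
Proof.
move=> hf hw; elim=> [|d IH] k hk.
  rewrite addn0 in hk; rewrite hk take_size -(aut_size w hf) take_size //.
have hk1 : k.+1 + d = size w by rewrite addSnnS.
have := IH _ hk1; set u := take k.+1 w => hu.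
have hsu : size u = k.+1 by rewrite size_takel // -hk1 leq_addr.
have hvu : valid m u by apply: valid_take.
have hpu : parent u = take k w by rewrite /parent hsu take_takel.
have [_ _ hpar _] := hf; move: (hpar _ hvu); rewrite hpu => ->.
rewrite /parent hu size_takel; last by rewrite (aut_size _ hf) -hk1 leq_addr.
by rewrite take_takel.
Qed.

Lemma aut_take f w k : is_aut m f -> valid m w -> k <= size w ->
  f (take k w) = take k (f w).
Proof. by move=> hf hw hk; apply: (aut_take_aux hf hw (subnKC hk)). Qed.

Lemma aut_prefix f u w : is_aut m f -> valid m w -> prefix u w -> prefix (f u) (f w).
Proof.
move=> hf hw hp; have hs := prefix_size hp; move: hp.
rewrite !prefixE (aut_size _ hf) => /eqP hu; apply/eqP.
by rewrite -(aut_take hf hw hs) hu.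
Qed.

Lemma aut_prefix_rev f u w : is_aut m f -> valid m w ->
  prefix (f u) (f w) -> prefix u w.
Proof.
move=> hf hw hp; have := prefix_size hp; rewrite !(aut_size _ hf) => hs.
move: hp; rewrite !prefixE (aut_size _ hf) -(aut_take hf hw hs) => /eqP.
by move/(aut_inj hf) ->.
Qed.

Lemma aut_fixv_pres f v w : is_aut m f -> f v = v -> prefix v w -> prefix v (f w).
Proof.
move=> hf hv hp; case: (classic (valid m w)) => hw.
  by rewrite -{1}hv; apply: aut_prefix.
by rewrite aut_fix.
Qed.

Definition fixout (f : afun) (u : vertex) :=
  forall w, valid m w -> ~~ prefix u w -> f w = w.

Lemma fixout_pres f u w : is_aut m f -> fixout f u -> prefix u w -> prefix u (f w).
Proof.
move=> hf hout hp; case: (classic (valid m w)) => hw; last by rewrite aut_fix.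
apply/negP => /negP hn.
have := hout _ (aut_valid hf hw) hn => /(aut_inj hf) e.
by move: hn; rewrite e hp.
Qed.

Lemma fixout_commute f h u u' : is_aut m f -> is_aut m h -> fixout f u -> fixout h u' ->
  ~~ prefix u u' -> ~~ prefix u' u -> forall w, f (h w) = h (f w).
Proof.
move=> hf hh hof hoh n1 n2 w.
case: (classic (valid m w)) => hw; last by rewrite !aut_fix.
have disj : forall x, prefix u x -> ~~ prefix u' x.
  move=> x p1; apply/negP => p2; case: (prefix_comp p1 p2) => p.
    by rewrite p in n1.
  by rewrite p in n2.
case: (boolP (prefix u w)) => pu.
  rewrite (hoh w hw (disj _ pu)); rewrite hoh //; [exact: aut_valid|].
  exact: disj (fixout_pres hf hof pu).
case: (boolP (prefix u' w)) => pu'.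
  rewrite (hof w hw pu) hof //; [exact: aut_valid|].
  apply/negP => p; have := fixout_pres hh hoh pu'.
  move=> p'; case: (prefix_comp p p') => q.
    by rewrite q in n1.
  by rewrite q in n2.
by rewrite (hof w hw pu) (hoh w hw pu') (hof w hw pu).
Qed.

End Aut.

Definition inv (f : afun) : afun :=
  epsilon (inhabits idf) (fun g => cancel f g /\ cancel g f).

Lemma inv_spec m f : is_aut m f -> cancel f (inv f) /\ cancel (inv f) f.
Proof.
case=> _ _ _ [g h1 h2].
by apply: (epsilon_spec (inhabits idf) (fun g => cancel f g /\ cancel g f)); exists g.
Qed.

Definition itf n (g : afun) : afun := fun v => iter n g v.

Section Sub.
Variables (m : nat -> nat) (G : afun -> Prop).
Hypothesis hG : is_subgroup m G.

Lemma sg_aut f : G f -> is_aut m f.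
Proof. by case: hG => h _ _ _; apply: h. Qed.

Lemma sg_id : G idf.
Proof. by case: hG. Qed.

Lemma sg_comp f g : G f -> G g -> G (f \o g).
Proof. by case: hG => _ _ h _; apply: h. Qed.

Lemma sg_inv f : G f -> G (inv f).
Proof.
move=> hf; have [h1 h2] := inv_spec (sg_aut hf).
by case: hG => _ _ _ h; apply: (h f).
Qed.

Lemma sg_invl f x : G f -> inv f (f x) = x.
Proof. by move=> hf; case: (inv_spec (sg_aut hf)) => h _; apply: h. Qed.

Lemma sg_invr f x : G f -> f (inv f x) = x.
Proof. by move=> hf; case: (inv_spec (sg_aut hf)) => _ h; apply: h. Qed.

Lemma sg_itf n g : G g -> G (itf n g).
Proof.
move=> hg; elim: n => [|n IH]; first exact: sg_id.
by have := sg_comp hg IH.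
Qed.

Lemma rist_conj t e u u' : G t -> rist m G u' e -> t u' = u ->
  rist m G u (fun x => t (e (inv t x))).
Proof.
move=> ht [he hout] htu; split.
  by apply: (sg_comp ht); apply: (sg_comp he); apply: sg_inv.
move=> x hx hn; have hti := sg_aut (sg_inv ht).
have hvx : valid m (inv t x) by apply: aut_valid.
rewrite hout ?sg_invr //; apply/negP => hp.
have := aut_prefix (sg_aut ht) hvx hp; rewrite htu sg_invr // => hp'.
by rewrite hp' in hn.
Qed.

End Sub.

Lemma pigeon (M : nat) (P : nat -> nat -> Prop) :
  (forall j, j <= M -> exists i, i < M /\ P j i) ->
  exists j j' i, [/\ j < j', j' <= M, P j i & P j' i].
Proof.
move=> H.
have ex : forall j, exists i, j <= M -> i < M /\ P j i.
  move=> j; case: (leqP j M) => hj.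
    by case: (H j hj) => i hi; exists i.
  by exists 0.
pose f j := proj1_sig (constructive_indefinite_description _ (ex j)).
have hf : forall j, j <= M -> f j < M /\ P j (f j).
  by move=> j; rewrite /f; case: (constructive_indefinite_description _ _).
pose s := map f (iota 0 M.+1).
case: (boolP (uniq s)) => hu.
  have : size s <= size (iota 0 M).
    apply: uniq_leq_size => // x /mapP [j]; rewrite mem_iota /= add0n ltnS => hj ->.
    by rewrite mem_iota /= add0n; case: (hf j hj).
  by rewrite size_map !size_iota ltnn.
case/(uniqPn 0): hu => i [j [hij hj]]; rewrite size_map size_iota in hj.
rewrite !(nth_map 0) ?size_iota // ?(ltn_trans hij) // !nth_iota ?(ltn_trans hij) // !add0n => e.
exists i, j, (f i); split => //; first by case: (hf i (ltnW (leq_trans hij hj))).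
by rewrite e; case: (hf j hj).
Qed.

Lemma in_map_In (T : Type) (U : eqType) (f : T -> U) x s :
  List.In x s -> f x \in map f s.
Proof.
elim: s => [//|y s IH] /= [->|h]; rewrite inE; first by rewrite eqxx.
by rewrite IH ?orbT.
Qed.

Lemma In_nth' (T : Type) (d x : T) s : List.In x s -> exists i, i < size s /\ nth d s i = x.
Proof.
elim: s => [//|y s IH] /= [->|h]; first by exists 0.
by case: (IH h) => i [hi e]; exists i.+1.
Qed.

Lemma prefix_nth (a b : vertex) i : prefix a b -> i < size a -> nth 0 a i = nth 0 b i.
Proof. by case/prefixP=> c -> hi; rewrite nth_cat hi. Qed.

Definition desc (w : vertex) j : vertex := w ++ rcons (nseq j 0) 1.

Lemma desc_nth w j j' : j <= j' -> nth 0 (desc w j') (size w + j) = (j == j').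
Proof.
move=> h; rewrite /desc nth_cat ltnNge leq_addr /= addKn nth_rcons size_nseq.
case: (ltnP j j') => h1.
  by rewrite nth_nseq h1 (ltn_eqF h1).
have -> : j = j' by apply/eqP; rewrite eqn_leq h h1.
by rewrite !eqxx.
Qed.

Lemma desc_incomp w j j' : j < j' -> ~~ prefix (desc w j) (desc w j') /\ ~~ prefix (desc w j') (desc w j).
Proof.
move=> h.
have s1 : size w + j < size (desc w j) by rewrite /desc size_cat size_rcons size_nseq ltn_add2l.
have s2 : size w + j < size (desc w j').
  by rewrite /desc size_cat size_rcons size_nseq ltn_add2l ltnS ltnW.
split; apply/negP => hp.
  have e := prefix_nth hp s1.
  by rewrite (desc_nth w (leqnn j)) (desc_nth w (ltnW h)) eqxx (ltn_eqF h) in e.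
have e := prefix_nth hp s2.
by rewrite (desc_nth w (leqnn j)) (desc_nth w (ltnW h)) eqxx (ltn_eqF h) in e.
Qed.

Lemma desc_prefix w j : prefix w (desc w j).
Proof. exact: prefix_prefix. Qed.

Lemma desc_valid m w j : (forall i, 2 <= m i) -> valid m w -> valid m (desc w j).
Proof.
move=> hm hw i; rewrite /desc size_cat nth_cat => hi.
case: (ltnP i (size w)) => h; first by apply: hw.
have h1 : 1 < m i := hm i.
have h0 : 0 < m i := ltnW h1.
rewrite nth_rcons size_nseq; case: (ltnP (i - size w) j) => h2; first by rewrite nth_nseq h2.
by case: eqP.
Qed.

Lemma foldr_fix (h : vertex -> afun) s z : (forall v, List.In v s -> h v z = z) ->
  foldr (fun v acc => h v \o acc) idf s z = z.
Proof.
elim: s => [//|v s IH] H /=; rewrite IH; first by apply: H; left.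
by move=> u hu; apply: H; right.
Qed.

Section Branch.
Variables (m : nat -> nat) (G : afun -> Prop).
Hypotheses (hm : forall i, 2 <= m i) (hG : is_subgroup m G) (hB : branch m G).

Lemma rist_nontriv u : valid m u -> exists e, rist m G u e /\ exists z, e z <> z.
Proof.
move=> hu; apply: NNPP => H0.
have H1 : forall e, rist m G u e -> forall z, e z = z.
  by move=> e he z; apply: NNPP => hz; apply: H0; exists e; split => //; exists z.
set N := size u.
have Hu : List.In u (level m N) by apply/inL/mem_level.
have [htr hfi] := hB.
have H2 : forall u', List.In u' (level m N) -> forall e, rist m G u' e -> forall z, e z = z.
  move=> u' hu' e0 he0 z; apply: NNPP => hz.
  case: (htr _ _ _ hu' Hu) => t [ht htu].
  have := H1 _ (rist_conj hG ht he0 htu) (t z).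
  rewrite (sg_invl hG _ ht) => /(aut_inj (sg_aut hG ht)); exact: hz.
case: (hfi N) => R [hR hdec].
set M := size R.
pose v0 : vertex := nseq M 0.
have hv0 : List.In v0 (level m M).
  apply/inL/mem_level; split; first by rewrite size_nseq.
  move=> i; rewrite size_nseq => hi; rewrite nth_nseq hi.
  by have := hm i; apply: leq_trans.
have sub : {subset level m M <= map (fun r => r v0) R}.
  move=> u' /inL hu'; case: (htr _ _ _ hv0 hu') => t [ht <-].
  case: (hdec _ ht) => r [k [hr [[h [hh ->]] ->]]].
  rewrite /= foldr_fix; first exact: in_map_In.
  by move=> v hv; apply: (H2 v hv); apply: hh.
have := uniq_leq_size (uniq_level m M) sub; rewrite size_map => hle.
have := leq_trans (size_level M hm) hle.
by rewrite leqNgt ltn_expl.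
Qed.

Lemma K_nontriv (K : afun -> Prop) w : is_subgroup m K -> Defs.subset K G -> finite_index K G ->
  valid m w -> exists c, K c /\ rist m G w c /\ exists z, c z <> z.
Proof.
move=> hK hKG [R [hR hdec]] hw.
set M := size R.
pose P j i := exists e k, [/\ rist m G (desc w j) e, (exists z, e z <> z), K k
   & e = k \o nth idf R i].
have : forall j, j <= M -> exists i, i < M /\ P j i.
  move=> j hj; case: (rist_nontriv (@desc_valid m w j hm hw)) => e [he hz].
  case: (hdec e he.1) => r [k [hr [hk ee]]].
  case: (In_nth' idf hr) => i [hi hie]; exists i; split => //.
  by exists e, k; split => //; rewrite hie.
case/pigeon => j [j' [i [hjj hj' [e [k [he hz hk ee]]] [e' [k' [he' hz' hk' ee']]]]]].
exists (k \o inv k'); split; first exact: (sg_comp hK hk (sg_inv hK hk')).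
have hc : forall x, (k \o inv k') x = e (inv e' x).
  move=> x; rewrite ee /=.
  have hx : e' (inv e' x) = x := sg_invr hG x he'.1.
  move: hx; rewrite {1}ee' /= => hx.
  have -> : inv k' x = nth idf R i (inv e' x) by rewrite -{1}hx (sg_invl hK _ hk').
  done.
have [inc1 inc2] := desc_incomp w hjj.
have fix' : forall x, ~~ prefix (desc w j') x -> inv e' x = x.
  move=> x hx; case: (classic (valid m x)) => hvx.
    have E : e' x = x by apply: he'.2.
    by rewrite -{1}E (sg_invl hG _ he'.1).
  exact: aut_fix (sg_aut hG (sg_inv hG he'.1)) hvx.
split.
  split; first by apply: hKG; exact: (sg_comp hK hk (sg_inv hK hk')).
  move=> x hx hn; rewrite hc fix'; first by apply: he.2 => //; apply/negP => p;
    move/negP: hn; apply; apply: prefix_trans p; apply: desc_prefix.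
  apply/negP => p; move/negP: hn; apply; apply: prefix_trans p; apply: desc_prefix.
case: hz => z hz; exists z; rewrite hc.
have hvz : valid m z.
  by apply: NNPP => hv; apply: hz; exact: aut_fix (sg_aut hG he.1) hv.
have pz : prefix (desc w j) z.
  by apply: NNPP => hp; apply: hz; apply: he.2 => //; apply/negP.
rewrite fix' //; apply/negP => p'; case: (prefix_comp pz p') => q.
  by rewrite q in inc1.
by rewrite q in inc2.
Qed.

Lemma K_noncomm (K : afun -> Prop) v : is_subgroup m K -> Defs.subset K G -> finite_index K G ->
  valid m v -> exists a b, [/\ K a, K b, rist m G v a, rist m G v b
     & exists y, a (b y) <> b (a y)].
Proof.
move=> hK hKG hfi hv.
case: (K_nontriv hK hKG hfi hv) => a [ha [hra [z hz]]].
have ha' := sg_aut hG hra.1.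
have hvz : valid m z by apply: NNPP => h; apply: hz; exact: aut_fix ha' h.
have pz : prefix v z by apply: NNPP => hp; apply: hz; apply: hra.2 => //; apply/negP.
case: (K_nontriv hK hKG hfi hvz) => b [hb [hrb [y hy]]].
have hb' := sg_aut hG hrb.1.
have hvy : valid m y by apply: NNPP => h; apply: hy; exact: aut_fix hb' h.
have py : prefix z y by apply: NNPP => hp; apply: hy; apply: hrb.2 => //; apply/negP.
exists a, b; split => //.
  split; first exact: hrb.1.
  move=> x hx hn; apply: hrb.2 => //; apply/negP => p; move/negP: hn; apply.
  exact: prefix_trans p.
exists y => E.
have p1 : prefix (a z) (a y) := aut_prefix ha' hvy py.
have n1 : ~~ prefix z (a y).
  by apply/negP => p2; apply: hz; exact: prefix_same p1 p2 (aut_size _ ha').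
move: E; rewrite (hrb.2 _ (aut_valid ha' hvy) n1) => /(aut_inj ha'); exact: hy.
Qed.

End Branch.

Lemma gen_comp (S : afun -> Prop) a b : gen S a -> gen S b -> gen S (a \o b).
Proof.
elim=> [//|s f hs hf IH|s s' f hs c1 c2 hf IH] hb.
  exact: (gen_mul hs (IH hb)).
exact: (gen_inv hs c1 c2 (IH hb)).
Qed.

Lemma gen_sub (S P : afun -> Prop) : P idf -> (forall f g, P f -> P g -> P (f \o g)) ->
  (forall f g, P f -> cancel f g -> cancel g f -> P g) ->
  (forall s, S s -> P s) -> forall f, gen S f -> P f.
Proof.
move=> h1 h2 h3 hS f; elim=> [//|s f' hs _ IH|s s' f' hs c1 c2 _ IH].
  exact: h2 (hS _ hs) IH.
exact: h2 (h3 _ _ (hS _ hs) c1 c2) IH.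
Qed.

Definition pb (Q : Prop) : bool := if excluded_middle_informative Q then true else false.

Lemma pbP (Q : Prop) : pb Q -> Q.
Proof. by rewrite /pb; case: excluded_middle_informative. Qed.

Lemma pbT (Q : Prop) : Q -> pb Q.
Proof. by rewrite /pb; case: excluded_middle_informative. Qed.

Section Schreier.
Variables (m : nat -> nat) (G P : afun -> Prop) (l : seq afun).
Hypotheses (hG : is_subgroup m G) (hl : forall f, G f <-> gen (fun s => List.In s l) f)
  (hPG : forall f, P f -> G f) (hP1 : P idf) (hPc : forall f g, P f -> P g -> P (f \o g))
  (hPi : forall f, P f -> P (inv f)) (hfi : finite_index P G).

Lemma schreier : exists S : seq afun, (forall s, List.In s S -> P s) /\
  forall f, P f -> gen (fun s => List.In s S) f.
Proof.
case: hfi => R [hR hdec].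
pose Q g (kr : afun * afun) := List.In kr.2 R /\ P kr.1 /\ g = kr.1 \o kr.2.
pose dk g := epsilon (inhabits (idf, idf)) (Q g).
have dkP : forall g, G g -> Q g (dk g).
  move=> g hg; apply: epsilon_spec; case: (hdec g hg) => r [k [hr [hk e]]].
  by exists (k, r).
have hlG : forall s, List.In s l -> G s.
  by move=> s hs; apply/hl; exact: (gen_mul hs (gen_id _)).
pose L := l ++ map inv l.
have hLG : forall s, List.In s L -> G s.
  move=> s /List.in_app_iff [hs|hs]; first exact: hlG.
  elim: (l) hs (hlG) => [//|x xs IH] /= [<-|hs] hx.
    by apply: (sg_inv hG); apply: hx; left.
  by apply: IH => // y hy; apply: hx; right.
pose S1 := List.flat_map (fun r => List.map (fun s => (dk (r \o s)).1) L) R.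
pose S3 := List.map (fun r => if pb (P r) then r else idf) R.
pose S := S1 ++ (dk idf).1 :: S3.
exists S.
have hS1 : forall r s, List.In r R -> List.In s L -> List.In (dk (r \o s)).1 S.
  move=> r s hr hs; apply/List.in_app_iff; left; apply/List.in_flat_map.
  by exists r; split => //; apply: List.in_map.
have hS0 : List.In (dk idf).1 S by apply/List.in_app_iff; right; left.
have hS3 : forall r, List.In r R -> P r -> List.In r S.
  move=> r hr hp; apply/List.in_app_iff; right; right.
  have -> : r = (if pb (P r) then r else idf) by rewrite pbT.
  exact: (List.in_map (fun r => if pb (P r) then r else idf)).
have SP : forall s, List.In s S -> P s.
  move=> s /List.in_app_iff [|[<-|]].
  - move/List.in_flat_map => [r [hr /List.in_map_iff [x [<- hx]]]].
    by case: (dkP _ (sg_comp hG (hR _ hr) (hLG _ hx))) => _ [].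
  - by case: (dkP _ (sg_id hG)) => _ [].
  - move/List.in_map_iff => [r [<- hr]]; case: (boolP (pb (P r))) => h //.
    exact: pbP.
split => //.
have genP : forall f, gen (fun s => List.In s S) f -> P f.
  apply: gen_sub => //.
  move=> f g hf c1 c2; have -> : g = inv f.
    apply: functional_extensionality => x.
    have [h1 h2] := inv_spec (sg_aut hG (hPG hf)).
    by rewrite -[in RHS](c2 x) h1.
  exact: hPi.
have claim : forall f, gen (fun s => List.In s l) f -> forall r, List.In r R ->
    exists k r', [/\ gen (fun s => List.In s S) k, List.In r' R & r \o f = k \o r'].
  move=> f0; elim=> [|s f hs hf IH|s s' f hs c1 c2 hf IH] r hr.
  - by exists idf, r; split => //; exact: gen_id.
  - have hrs : G (r \o s) := sg_comp hG (hR _ hr) (hlG _ hs).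
    case: (dkP _ hrs) => hr1 [_ e1].
    case: (IH _ hr1) => k' [r' [hk' hr' e2]].
    exists ((dk (r \o s)).1 \o k'), r'; split => //.
      by apply: gen_mul => //; apply: hS1 => //; apply/List.in_app_iff; left.
    change ((r \o s) \o f = (dk (r \o s)).1 \o (k' \o r')).
    by rewrite [in LHS]e1 -e2.
  - have es' : s' = inv s.
      apply: functional_extensionality => x.
      have [h1 h2] := inv_spec (sg_aut hG (hlG _ hs)).
      by rewrite -[in RHS](c2 x) h1.
    subst s'.
    have hsL : List.In (inv s) L.
      by apply/List.in_app_iff; right; apply: (List.in_map inv).
    have hrs : G (r \o inv s) := sg_comp hG (hR _ hr) (hLG _ hsL).
    case: (dkP _ hrs) => hr1 [_ e1].
    case: (IH _ hr1) => k' [r' [hk' hr' e2]].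
    exists ((dk (r \o inv s)).1 \o k'), r'; split => //.
      by apply: gen_mul => //; apply: hS1.
    change ((r \o inv s) \o f = (dk (r \o inv s)).1 \o (k' \o r')).
    by rewrite [in LHS]e1 -e2.
move=> f hf.
case: (dkP _ (sg_id hG)) => hr0 [hk0 e0].
case: (claim f (proj1 (hl f) (hPG hf)) _ hr0) => k [r' [hk hr' e]].
set k0 := (dk idf).1 in hk0 e0.
have ef : f = k0 \o (k \o r').
  rewrite -e.
  change (f = (k0 \o (dk idf).2) \o f); by rewrite -e0.
have hkP := genP _ hk.
have hr'P : P r'.
  have -> : r' = inv k \o (inv k0 \o f).
    apply: functional_extensionality => x /=.
    by rewrite ef /= (sg_invl hG _ (hPG hk0)) (sg_invl hG _ (hPG hkP)).
  by apply: hPc; [apply: hPi | apply: hPc; [apply: hPi|]].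
rewrite ef; apply: gen_comp; first exact: (gen_mul hS0 (gen_id _)).
by apply: gen_comp => //; exact: (gen_mul (hS3 _ hr' hr'P) (gen_id _)).
Qed.
End Schreier.

Definition piv (v : vertex) (x : afun) : afun := fun w => if prefix v w then x w else w.

Section Proj.
Variables (m : nat -> nat) (G : afun -> Prop) (v : vertex).
Hypotheses (hG : is_subgroup m G) (hv : valid m v).

Definition PP x := [/\ G x, x v = v & G (piv v x)].

Lemma piv_comp x y : is_aut m y -> y v = v -> piv v (x \o y) = piv v x \o piv v y.
Proof.
move=> hy hyv; apply: functional_extensionality => w; rewrite /piv /=.
case: ifP => h; last by rewrite h.
by rewrite (aut_fixv_pres hy hyv h).
Qed.

Lemma piv_id : piv v idf = idf.
Proof. by apply: functional_extensionality => w; rewrite /piv; case: ifP. Qed.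

Lemma PP_id : PP idf.
Proof. by split; rewrite ?piv_id //; exact: sg_id hG. Qed.

Lemma PP_G x : PP x -> G x.
Proof. by case. Qed.

Lemma PP_comp x y : PP x -> PP y -> PP (x \o y).
Proof.
case=> hx hxv hpx [hy hyv hpy]; split; first exact (sg_comp hG hx hy).
  by rewrite /= hyv hxv.
by rewrite piv_comp //; [exact (sg_comp hG hpx hpy) | exact (sg_aut hG hy)].
Qed.

Lemma PP_inv x : PP x -> PP (inv x).
Proof.
case=> hx hxv hpx; have hxa := sg_aut hG hx.
have hix := sg_inv hG hx; have hixa := sg_aut hG hix.
have hixv : inv x v = v by rewrite -{1}hxv (sg_invl hG _ hx).
split => //.
case: hG => _ _ _ h; apply: (h (piv v x)) => //.
  move=> w; rewrite /piv; case: (boolP (prefix v w)) => p.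
    by rewrite ?p /= ?(aut_fixv_pres hxa hxv p) /= ?(sg_invl hG _ hx).
  by rewrite ?(negbTE p) /= ?(negbTE p).
move=> w; rewrite /piv; case: (boolP (prefix v w)) => p.
  by rewrite ?p /= ?(aut_fixv_pres hixa hixv p) /= ?(sg_invr hG _ hx).
by rewrite ?(negbTE p) /= ?(negbTE p).
Qed.

Lemma foldr_G (h : vertex -> afun) s : (forall u, List.In u s -> G (h u)) ->
  G (foldr (fun u acc => h u \o acc) idf s).
Proof.
elim: s => [|u s IH] H /=; first exact: sg_id hG.
apply: (sg_comp hG); first by apply: H; left.
by apply: IH => x hx; apply: H; right.
Qed.

Lemma foldr_eval (h : vertex -> afun) s w : uniq s ->
  (forall u, List.In u s -> size u = size v /\ rist m G u (h u)) -> prefix v w ->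
  foldr (fun u acc => h u \o acc) idf s w = if v \in s then h v w else w.
Proof.
elim: s => [//|u s IH] /= /andP [hus hs] H hw.
rewrite IH //; last by move=> x hx; apply: H; right.
have [hsu hru] := H u (or_introl erefl).
rewrite inE; case: (eqVneq v u) => [e|hne] /=.
  by subst u; rewrite (negbTE hus).
set z := if v \in s then h v w else w.
have pz : prefix v z.
  rewrite /z; case: ifP => // hvs.
  have [_ hrv] := H v (or_intror (proj2 (inL _ _) hvs)).
  exact: fixout_pres (sg_aut hG hrv.1) hrv.2 hw.
case: (classic (valid m z)) => hvz; last exact: aut_fix (sg_aut hG hru.1) hvz.
apply: hru.2 => //; apply/negP => puz.
by move: hne; rewrite (prefix_same pz puz) ?eqxx.
Qed.

Lemma Rist_PP k : Rist m G (size v) k -> PP k.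
Proof.
case=> h [hh ->]; set s := level m (size v).
have hvs : v \in s by apply/mem_level.
have H : forall u, List.In u s -> size u = size v /\ rist m G u (h u).
  by move=> u hu; split; [case: (proj1 (mem_level _ _ _) (proj1 (inL _ _) hu)) | apply: hh].
have hrv : rist m G v (h v) by apply: hh; apply/inL.
have hav := sg_aut hG hrv.1.
have hvv : h v v = v.
  apply/esym/prefix_eq_size; last by rewrite (aut_size _ hav).
  exact: fixout_pres hav hrv.2 (prefix_refl v).
split.
- by apply: foldr_G => u hu; case: (H u hu) => _ [].
- by rewrite foldr_eval ?uniq_level ?prefix_refl // hvs.
have -> : piv v (foldr (fun u acc => h u \o acc) idf s) = h v.
  apply: functional_extensionality => w; rewrite /piv; case: ifP => p.
    by rewrite foldr_eval ?uniq_level // hvs.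
  case: (classic (valid m w)) => hw; last by rewrite (aut_fix hav hw).
  by rewrite hrv.2 // p.
exact: hrv.1.
Qed.

Lemma PP_fi : branch m G -> finite_index PP G.
Proof.
case=> _ hfi; case: (hfi (size v)) => R [hR hdec]; exists R; split => //.
move=> g hg; case: (hdec g hg) => r [k [hr [hk e]]].
by exists r, k; split => //; split => //; apply: Rist_PP.
Qed.

End Proj.

Lemma ex_min (P : nat -> Prop) : (exists n, P n) -> exists n, P n /\ forall k, P k -> n <= k.
Proof.
move=> [n hn]; apply: NNPP => H.
suff : forall k j, j <= k -> ~ P j by move/(_ n n (leqnn n)).
elim=> [|k IH] j hj hp; apply: H; exists j; split => // k' hk'.
  by move: hj; rewrite leqn0 => /eqP ->.
case: (leqP j k') => // hlt.
by exfalso; apply: (IH k') => //; rewrite -ltnS (leq_trans hlt hj).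
Qed.

Lemma iter_itf a b (g : afun) w : iter a (itf b g) w = iter (b * a) g w.
Proof.
elim: a => [|a IH]; first by rewrite muln0.
by rewrite iterS IH /itf -iterD mulnS.
Qed.

Lemma iter_mul_fix (f : afun) d k w : iter d f w = w -> iter (k * d) f w = w.
Proof.
move=> h; elim: k => [//|k IH]; by rewrite mulSn iterD IH h.
Qed.

Lemma prime_elt m (G : afun -> Prop) g : is_subgroup m G -> G g ->
  (exists v, g v <> v) -> (exists n, 0 < n /\ forall v, iter n g v = v) ->
  exists gam p v0, [/\ G gam, 1 < p, forall w, iter p gam w = w, valid m v0
    & forall i j, i < p -> j < p -> iter i gam v0 = iter j gam v0 -> i = j].
Proof.
move=> hG hg [v hv] hn.
case: (ex_min hn) => o [[ho0 ho] omin].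
have ho1 : 1 < o.
  case: o ho0 ho omin => [//|[|o]] // _ h1; by case: hv; apply: h1.
set p := pdiv o.
have pp : prime p := pdiv_prime ho1.
have p1 : 1 < p := prime_gt1 pp.
set q := o %/ p.
have q0 : 0 < q by rewrite divn_gt0 ?prime_gt0 // pdiv_leq // ltnW.
have qo : q < o by apply: ltn_Pdiv.
have qp : q * p = o by rewrite divnK // pdiv_dvd.
set gam := itf q g.
have hgam : G gam := sg_itf hG q hg.
have hgp : forall w, iter p gam w = w by move=> w; rewrite iter_itf qp.
have [v0 hv0] : exists v0, gam v0 <> v0.
  apply: NNPP => H; have : o <= q.
    apply: omin; split => // w; apply: NNPP => hw; apply: H; exists w.
    by rewrite /gam /itf.
  by rewrite leqNgt qo.
have hvv0 : valid m v0.
  by apply: NNPP => h; apply: hv0; exact: aut_fix (sg_aut hG hgam) h.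
exists gam, p, v0; split => //.
have hex : exists d, 0 < d /\ iter d gam v0 = v0 by exists p; rewrite ltnW.
case: (ex_min hex) => d [[d0 hd] dmin].
have dp : d %| p.
  have hr : iter (p %% d) gam v0 = v0.
    have e1 : p = p %% d + p %/ d * d by rewrite addnC -divn_eq.
    by have := hgp v0; rewrite {1}e1 iterD iter_mul_fix.
  rewrite /dvdn; apply/eqP; apply: NNPP => hne.
  have : d <= p %% d by apply: dmin; split => //; rewrite lt0n; apply/eqP.
  by rewrite leqNgt ltn_pmod.
have dP : d = p.
  case/primeP: pp => _ /(_ d dp) /orP [/eqP d1|/eqP //].
  by exfalso; apply: hv0; move: hd; rewrite d1.
have key : forall i j, i < j -> j < p -> iter i gam v0 = iter j gam v0 -> False.
  move=> i j hij hj e.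
  have : iter (p - j + i) gam v0 = v0.
    by rewrite iterD e -iterD (subnK (ltnW hj)) hgp.
  move=> h; have h2 : d <= p - j + i.
    by apply: dmin; split => //; rewrite addn_gt0 subn_gt0 hj.
  have h3 : p - j + i < p by rewrite -[X in _ < X](subnK (ltnW hj)) ltn_add2l.
  by have := leq_ltn_trans h2 h3; rewrite dP ltnn.
move=> i j hi hj e; case: (ltngtP i j) => // h.
  by exfalso; apply: (key i j).
by exfalso; apply: (key j i).
Qed.

Section Dmap.
Variables (m : nat -> nat) (G : afun -> Prop) (gam : afun) (p : nat) (v : vertex).
Hypotheses (hG : is_subgroup m G) (hgam : G gam) (hp : 1 < p)
  (hgp : forall w, iter p gam w = w) (hv : valid m v)
  (horb : forall i j, i < p -> j < p -> iter i gam v = iter j gam v -> i = j).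

Definition conjf i (a : afun) : afun := fun w => iter i gam (a (iter (p - i) gam w)).
Definition Dm (a : afun) : afun := foldr (fun i acc => conjf i a \o acc) idf (iota 0 p).
Definition orb i := iter i gam v.
Definition RL (a : afun) := is_aut m a /\ fixout m a v.

Lemma itf_aut k : is_aut m (itf k gam).
Proof. exact (sg_aut hG (sg_itf hG k hgam)). Qed.

Lemma iter_inv1 i w : i <= p -> iter i gam (iter (p - i) gam w) = w.
Proof. by move=> h; rewrite -iterD subnKC. Qed.

Lemma iter_inv2 i w : i <= p -> iter (p - i) gam (iter i gam w) = w.
Proof. by move=> h; rewrite -iterD subnK. Qed.

Lemma iter_valid k w : valid m w -> valid m (iter k gam w).
Proof. exact: (aut_valid (itf_aut k)). Qed.

Lemma iter_fix k w : ~ valid m w -> iter k gam w = w.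
Proof. exact: (aut_fix (itf_aut k)). Qed.

Arguments iter_valid k [w].
Arguments iter_fix k [w].

Lemma orb_size i : size (orb i) = size v.
Proof. exact: (aut_size _ (itf_aut i)). Qed.

Lemma pref_to i w : i <= p -> valid m w -> prefix (orb i) w -> prefix v (iter (p - i) gam w).
Proof.
move=> hi hw h; have := aut_prefix (itf_aut (p - i)) hw h.
by rewrite /itf /orb iter_inv2.
Qed.

Lemma pref_from i x : valid m x -> prefix v x -> prefix (orb i) (iter i gam x).
Proof. by move=> hx h; exact: (aut_prefix (itf_aut i) hx h). Qed.

Arguments pref_from i [x].

Lemma pref_to' i w : i <= p -> valid m w -> prefix v (iter (p - i) gam w) -> prefix (orb i) w.
Proof.
move=> hi hw h; have := pref_from i (iter_valid (p - i) hw) h.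
by rewrite iter_inv1.
Qed.

Lemma orb_disj i j w : i < p -> j < p -> prefix (orb i) w -> prefix (orb j) w -> i = j.
Proof.
move=> hi hj h1 h2; apply: horb => //; apply: (prefix_same h1 h2).
by rewrite !orb_size.
Qed.

Lemma conjf_out i a w : RL a -> i <= p -> ~~ prefix (orb i) w -> conjf i a w = w.
Proof.
move=> [ha hoa] hi hn; rewrite /conjf.
case: (classic (valid m w)) => hw; last first.
  by rewrite (iter_fix _ hw) (aut_fix ha hw) (iter_fix _ hw).
rewrite hoa ?iter_inv1 //; first exact: iter_valid.
by apply/negP => h; move/negP: hn; apply; apply: pref_to'.
Qed.

Lemma conjf_pres i a w : RL a -> i <= p -> prefix (orb i) w -> prefix (orb i) (conjf i a w).
Proof.
move=> [ha hoa] hi h; case: (classic (valid m w)) => hw; last first.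
  by rewrite /conjf (iter_fix _ hw) (aut_fix ha hw) (iter_fix _ hw).
rewrite /conjf; apply: pref_from.
  by apply: (aut_valid ha); apply: iter_valid.
by apply: fixout_pres ha hoa _; apply: pref_to.
Qed.

Lemma foldr_in a s i w : RL a -> uniq s -> all (fun j => j < p) s -> i < p ->
  prefix (orb i) w ->
  foldr (fun i acc => conjf i a \o acc) idf s w = if i \in s then conjf i a w else w.
Proof.
move=> ha; elim: s => [//|j s IH] /= /andP [hjs hs] /andP [hj hall] hi hw.
rewrite IH // inE.
set z := if i \in s then conjf i a w else w.
have pz : prefix (orb i) z by rewrite /z; case: ifP => // _; apply: conjf_pres => //; exact: ltnW.
case: (eqVneq i j) => [e|hne] /=.
  by subst j; rewrite /z (negbTE hjs).
rewrite conjf_out ?(ltnW hj) //; apply/negP => pj.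
by move: hne; rewrite (orb_disj hi hj pz pj) eqxx.
Qed.

Lemma foldr_out a s w : RL a -> all (fun j => j < p) s ->
  (forall i, i < p -> ~~ prefix (orb i) w) ->
  foldr (fun i acc => conjf i a \o acc) idf s w = w.
Proof.
move=> ha; elim: s => [//|j s IH] /= /andP [hj hall] hw.
by rewrite IH // conjf_out // ?(ltnW hj) // hw.
Qed.

Lemma all_iota : all (fun j => j < p) (iota 0 p).
Proof. by apply/allP => j; rewrite mem_iota add0n. Qed.

Lemma Dm_in a i w : RL a -> i < p -> prefix (orb i) w -> Dm a w = conjf i a w.
Proof.
move=> ha hi hw; rewrite /Dm (@foldr_in a _ i w) ?iota_uniq ?all_iota //.
by rewrite mem_iota add0n hi.
Qed.

Lemma Dm_out a w : RL a -> (forall i, i < p -> ~~ prefix (orb i) w) -> Dm a w = w.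
Proof. by move=> ha hw; rewrite /Dm foldr_out ?all_iota. Qed.

Lemma Dm_v a w : RL a -> prefix v w -> Dm a w = a w.
Proof.
move=> ha hw; rewrite (@Dm_in a 0) ?(ltn_trans _ hp) //.
by rewrite /conjf subn0 hgp.
Qed.

Lemma conjf_G i a : G a -> G (conjf i a).
Proof.
move=> ha; exact: (sg_comp hG (sg_itf hG i hgam) (sg_comp hG ha (sg_itf hG (p - i) hgam))).
Qed.

Lemma Dm_G a : G a -> G (Dm a).
Proof.
move=> ha; rewrite /Dm; elim: (iota 0 p) => [|i s IH] /=; first exact: sg_id hG.
exact: (sg_comp hG (conjf_G i ha) IH).
Qed.

Lemma RL_comp a b : RL a -> RL b -> RL (a \o b).
Proof.
move=> [ha hoa] [hb hob]; split.
  case: ha => [a1 a2 a3 a4]; case: hb => [b1 b2 b3 b4]; split.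
  - by move=> w hw /=; rewrite b1 // a1.
  - by move=> w hw /=; case: (b2 w hw) => hbv hbs; case: (a2 _ hbv) => ? ->.
  - move=> w hw /=; rewrite b3 // a3 //; by case: (b2 w hw).
  - exact: bij_comp.
by move=> w hw hn /=; rewrite hob // hoa.
Qed.

Lemma Dm_hom a b : RL a -> RL b -> Dm (a \o b) = Dm a \o Dm b.
Proof.
move=> ha hb; have hab := RL_comp ha hb.
apply: functional_extensionality => w /=.
case: (boolP (has (fun i => prefix (orb i) w) (iota 0 p))).
  case/hasP => i; rewrite mem_iota add0n /= => hi hw.
  rewrite (Dm_in hab hi hw) (Dm_in hb hi hw) (Dm_in ha hi (conjf_pres hb (ltnW hi) hw)).
  by rewrite /conjf iter_inv2 // ltnW.
move/hasPn => hn.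
have hn' : forall i, i < p -> ~~ prefix (orb i) w.
  by move=> i hi; apply: hn; rewrite mem_iota add0n.
by rewrite !Dm_out.
Qed.

Lemma RL_id : RL idf.
Proof. by split; [exact (sg_aut hG (sg_id hG)) | move=> w]. Qed.

Lemma Dm_id : Dm idf = idf.
Proof.
apply: functional_extensionality => w.
case: (boolP (has (fun i => prefix (orb i) w) (iota 0 p))).
  case/hasP => i; rewrite mem_iota add0n /= => hi hw.
  by rewrite (Dm_in RL_id hi hw) /conjf iter_inv1 // ltnW.
move/hasPn => hn; rewrite Dm_out //; first exact: RL_id.
by move=> i hi; apply: hn; rewrite mem_iota add0n.
Qed.

Lemma gam_orb j : j < p -> exists j', j' < p /\ gam (orb j') = orb j.
Proof.
case: j => [|j] hj.
  exists p.-1; split; first by rewrite prednK ?ltnn // ltnW ?(ltn_trans _ hp) //; case: (p) hp.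
  by rewrite /orb -iterS prednK ?hgp // ltnW.
by exists j; split; [exact: ltnW|].
Qed.

Lemma Dm_gam a : RL a -> gam \o Dm a = Dm a \o gam.
Proof.
move=> ha; have hga := sg_aut hG hgam.
apply: functional_extensionality => w /=.
case: (classic (valid m w)) => hw; last first.
  have e : Dm a w = w.
    case: (boolP (has (fun i => prefix (orb i) w) (iota 0 p))).
      case/hasP => i; rewrite mem_iota add0n /= => hi hw'.
      rewrite (Dm_in ha hi hw') /conjf (iter_fix _ hw); case: ha => ha' _.
      by rewrite (aut_fix ha' hw) (iter_fix _ hw).
    move/hasPn => hn; rewrite Dm_out //.
    by move=> i hi; apply: hn; rewrite mem_iota add0n.
  by rewrite e (aut_fix hga hw) e.
case: (boolP (has (fun i => prefix (orb i) w) (iota 0 p))).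
  case/hasP => i; rewrite mem_iota add0n /= => hi hwi.
  have hgi : prefix (orb i.+1) (gam w) by exact: (aut_prefix hga hw hwi).
  rewrite (Dm_in ha hi hwi).
  case: (ltnP i.+1 p) => hi1.
    rewrite (Dm_in ha hi1 hgi) /conjf -iterSr subnSK //.
  have e : i.+1 = p by apply/eqP; rewrite eqn_leq hi hi1.
  have hgv : prefix v (gam w) by move: hgi; rewrite e /orb hgp.
  rewrite (Dm_v ha hgv) /conjf -iterS e hgp -e subSnn.
  by [].
move/hasPn => hn.
have hn' : forall i, i < p -> ~~ prefix (orb i) w.
  by move=> i hi; apply: hn; rewrite mem_iota add0n.
rewrite Dm_out // Dm_out //.
move=> j hj; apply/negP => h; case: (gam_orb hj) => j' [hj' e].
move: h; rewrite -e => h; move/negP: (hn' _ hj'); apply.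
exact: (aut_prefix_rev hga hw h).
Qed.

End Dmap.

Definition Fp (s : seq nat) (f : afun) : afun := foldr (fun _ acc => f \o acc) idf s.

Lemma Fp_iter s f w : Fp s f w = iter (size s) f w.
Proof. by elim: s => [//|x s IH] /=; rewrite IH. Qed.

Lemma iter_comm (f g : afun) : (forall w, f (g w) = g (f w)) ->
  forall n k w, iter n f (iter k g w) = iter k g (iter n f w).
Proof.
move=> h.
have h1 : forall k w, f (iter k g w) = iter k g (f w).
  by elim=> [//|k IH] w /=; rewrite h IH.
have h2 : forall n w, iter n f (g w) = g (iter n f w).
  by elim=> [//|n IH] w /=; rewrite IH h.
elim=> [//|n IH] k w /=; rewrite IH h1 //.
Qed.

Theorem lemma3p2 (m : nat -> nat) (G : afun -> Prop) :
  (forall n, 2 <= m n) ->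
  is_subgroup m G ->
  fin_gen G ->
  branch m G ->
  (exists g, [/\ G g, (exists v, g v <> v)
                & exists n, 0 < n /\ forall v, iter n g v = v]) ->
  ~ LR m G.
Proof.
move=> hm hG [l hl] hB [g [hg hmv hn]] hLR.
case: (prime_elt hG hg hmv hn) => gam [p [v [hgam hp hgp hv horb]]].
have hPPfi := PP_fi hG hv hB.
have hPG : forall f, PP G v f -> G f by move=> f; case.
have hPc : forall f g, PP G v f -> PP G v g -> PP G v (f \o g).
  by move=> f g0; apply: (PP_comp hG).
have hPi : forall f, PP G v f -> PP G v (inv f) by move=> f; apply: (PP_inv hG).
case: (schreier hG hl hPG (PP_id v hG) hPc hPi hPPfi) => S [hSP hPS].
pose L := gam :: List.map (fun s => Dm gam p (piv v s)) S.
have RLpiv : forall x, PP G v x -> RL m v (piv v x).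
  move=> x [_ _ hx]; split; first exact (sg_aut hG hx).
  by move=> w _ hn'; rewrite /piv (negbTE hn').
have hLG : forall s, List.In s L -> G s.
  move=> s [<-|hs]; first exact: hgam.
  apply List.in_map_iff in hs; case: hs => x [<- hx].
  by apply: (Dm_G p hG hgam); case: (hSP x hx).
case: (hLR L hLG) => K [phi [[hK hKG hHK hKfi] [hphiH hphihom hphiid]]].
set H := gen (fun s => List.In s L).
have genD : forall f, gen (fun s => List.In s S) f -> H (Dm gam p (piv v f)).
  have PPgen : forall f, gen (fun s => List.In s S) f -> PP G v f.
    apply: gen_sub; [exact: (PP_id v hG)|exact: hPc| |exact: hSP].
    move=> f g0 hf c1 c2; have -> : g0 = inv f.
      apply: functional_extensionality => x.
      have [h1 h2] := inv_spec (sg_aut hG (hPG _ hf)).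
      by rewrite -[in RHS](c2 x) h1.
    exact: hPi.
  move=> f0; elim=> [|s f hs hf IH|s s' f hs c1 c2 hf IH].
  - by rewrite piv_id (Dm_id hG hgam hgp horb); exact: gen_id.
  - have hPf := PPgen _ hf; have hPs := hSP _ hs.
    have [hfG hfv _] := hPf.
    rewrite (piv_comp s (sg_aut hG hfG) hfv).
    rewrite (Dm_hom hG hgam hgp horb (RLpiv _ hPs) (RLpiv _ hPf)).
    apply: gen_mul => //; right; exact: (List.in_map (fun s => Dm gam p (piv v s))).
  - have hPf := PPgen _ hf; have hPs := hSP _ hs.
    have es' : s' = inv s.
      apply: functional_extensionality => x.
      have [h1 h2] := inv_spec (sg_aut hG (hPG _ hPs)).
      by rewrite -[in RHS](c2 x) h1.
    subst s'; have hPs' := hPi _ hPs.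
    have [hfG hfv _] := hPf.
    rewrite (piv_comp (inv s) (sg_aut hG hfG) hfv).
    rewrite (Dm_hom hG hgam hgp horb (RLpiv _ hPs') (RLpiv _ hPf)).
    have hinv : forall x y, PP G v x -> PP G v y -> (forall w, x (y w) = w) ->
        forall w, Dm gam p (piv v x) (Dm gam p (piv v y) w) = w.
      move=> x y hx hy hxy w.
      have := f_equal (fun F => F w) (Dm_hom hG hgam hgp horb (RLpiv _ hx) (RLpiv _ hy)).
      have [hyG hyv _] := hy.
      rewrite /= -(piv_comp x (sg_aut hG hyG) hyv).
      have -> : x \o y = idf by apply: functional_extensionality => z; apply: hxy.
      by rewrite piv_id (Dm_id hG hgam hgp horb) => <-.
    apply: (gen_inv (s := Dm gam p (piv v s))).
    + by right; exact: (List.in_map (fun s => Dm gam p (piv v s))).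
    + by apply: hinv => // w; rewrite (sg_invl hG _ (hPG _ hPs)).
    + by apply: hinv => // w; rewrite (sg_invr hG _ (hPG _ hPs)).
    + done.
have hcommL : forall s, List.In s L -> gam \o s = s \o gam.
  move=> s [<-|hs] //; apply List.in_map_iff in hs; case: hs => x [<- hx].
  exact: (Dm_gam hG hgam hp hgp horb (RLpiv _ (hSP _ hx))).
have hc : forall h, H h -> gam \o h = h \o gam.
  move=> h0; elim=> [//|s f hs hf IH|s s' f hs c1 c2 hf IH].
    change ((gam \o s) \o f = s \o (f \o gam)); by rewrite hcommL // -IH.
  have hs' : gam \o s' = s' \o gam.
    apply: functional_extensionality => w /=.
    have e := f_equal (fun F => F (s' w)) (hcommL _ hs); simpl in e.
    by rewrite -{1}(c1 (gam (s' w))) -e c2.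
  change ((gam \o s') \o f = s' \o (f \o gam)); by rewrite hs' -IH.
have Hitf : forall k, H (itf k gam).
  elim=> [|k IH]; first exact: gen_id.
  exact: (gen_mul (or_introl erefl) IH).
have Kitf : forall k, K (itf k gam).
  by move=> k; apply: hHK; apply: Hitf.
have Kc : forall x y, K x -> K y -> K (x \o y).
  by move=> x y; apply: (sg_comp hK).
have phiI : forall h, H h -> phi h = h.
  by move=> h hh; apply: hphiid.
have comm_itf : forall h, H h -> forall k, itf k gam \o h = h \o itf k gam.
  move=> h hh; elim=> [//|k IH].
  change (gam \o (itf k gam \o h) = (h \o gam) \o itf k gam).
  by rewrite IH -(hc _ hh).
have phi_conj : forall c, K c -> forall i, i <= p -> phi (conjf gam p i c) = phi c.
  move=> c hc0 i hi.
  change (phi (itf i gam \o (c \o itf (p - i) gam)) = phi c).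
  rewrite (hphihom (itf i gam) (c \o itf (p - i) gam)) //; last exact: Kc.
  rewrite (hphihom c (itf (p - i) gam)) // (phiI _ (Hitf i)) (phiI _ (Hitf (p - i))).
  apply: functional_extensionality => w.
  have e : itf i gam (phi c (itf (p - i) gam w)) = phi c (itf i gam (itf (p - i) gam w))
    := f_equal (fun F => F (itf (p - i) gam w)) (comm_itf _ (hphiH _ hc0) i).
  change (itf i gam (phi c (itf (p - i) gam w)) = phi c w); rewrite e /itf.
  by rewrite -iterD (subnKC hi) hgp.
have phi_Dm : forall c, K c -> phi (Dm gam p c) = Fp (iota 0 p) (phi c).
  move=> c hc0; rewrite /Dm.
  have : all (fun j => j <= p) (iota 0 p) by apply/allP => j; rewrite mem_iota add0n => /ltnW.
  elim: (iota 0 p) => [|j s IH] /=.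
    by move=> _; apply: hphiid; exact: gen_id.
  case/andP => hj hall.
  have Kconj : K (conjf gam p j c).
    change (K (itf j gam \o (c \o itf (p - j) gam))).
    exact (Kc _ _ (Kitf _) (Kc _ _ hc0 (Kitf _))).
  have Kf : forall s', K (foldr (fun i acc => conjf gam p i c \o acc) idf s').
    elim=> [|i s' IH'] /=; first exact: sg_id hK.
    apply: (Kc) => //; change (K (itf i gam \o (c \o itf (p - i) gam))).
    exact (Kc _ _ (Kitf _) (Kc _ _ hc0 (Kitf _))).
  by rewrite (hphihom (conjf gam p j c) _) // phi_conj // IH.
case: (K_noncomm hm hG hB hK hKG hKfi hv) => a [b [hKa hKb hra hrb [y hy]]].
have RLr : forall x, rist m G v x -> RL m v x.
  by move=> x [hx hox]; split; [exact (sg_aut hG hx) | exact: hox].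
have PPr : forall x, rist m G v x -> PP G v x /\ piv v x = x.
  move=> x hx; have [hxa hox] := RLr _ hx.
  have ep : piv v x = x.
    apply: functional_extensionality => w; rewrite /piv; case: ifP => // hnp.
    case: (classic (valid m w)) => hw; last by rewrite (aut_fix hxa hw).
    by rewrite hox // hnp.
  split => //; split; [exact: hx.1 | | by rewrite ep; exact: hx.1].
  apply/esym/prefix_eq_size; last by rewrite (aut_size _ hxa).
  exact: fixout_pres hxa hox (prefix_refl v).
have DH : forall x, rist m G v x -> H (Dm gam p x).
  move=> x hx; have [hP ep] := PPr _ hx.
  by have := genD _ (hPS _ hP); rewrite ep.
have phiD : forall x, rist m G v x -> K x -> Dm gam p x = Fp (iota 0 p) (phi x).
  by move=> x hx hKx; rewrite -(phiI _ (DH _ hx)) phi_Dm.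
have hb1K : K (conjf gam p 1 b).
  change (K (itf 1 gam \o (b \o itf (p - 1) gam))).
  exact (Kc _ _ (Kitf _) (Kc _ _ hKb (Kitf _))).
have hab1 : a \o conjf gam p 1 b = conjf gam p 1 b \o a.
  apply: functional_extensionality => w /=.
  have [hab hoa] := RLr _ hra; have hbr := RLr _ hrb.
  have hb1G : G (conjf gam p 1 b) := conjf_G p hG hgam 1 hrb.1.
  have hneq : v <> orb gam v 1.
    by move=> e; have := horb 0 1 (ltn_trans (ltnSn 0) hp) hp e.
  apply: (fixout_commute (u := v) (u' := orb gam v 1) hab (sg_aut hG hb1G) hoa).
  - move=> x hx hnx; apply: (conjf_out hG hgam hgp hbr) => //; exact: ltnW.
  - apply/negP => pr; apply: hneq; apply: prefix_eq_size pr _.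
    by rewrite (orb_size v hG hgam).
  - apply/negP => pr; apply: hneq; apply/esym; apply: prefix_eq_size pr _.
    by rewrite (orb_size v hG hgam).
have hphiab : forall w, phi a (phi b w) = phi b (phi a w).
  move=> w.
  have e := f_equal phi hab1.
  rewrite (hphihom a _) // (hphihom _ a) // (phi_conj b hKb 1 (ltnW hp)) in e.
  exact: (f_equal (fun F => F w) e).
have hDD : forall w, Dm gam p a (Dm gam p b w) = Dm gam p b (Dm gam p a w).
  move=> w; rewrite (phiD a hra hKa) (phiD b hrb hKb) !Fp_iter.
  by apply: iter_comm.
have [haa hoa] := RLr _ hra; have [hba hob] := RLr _ hrb.
apply: hy.
case: (boolP (prefix v y)) => pv.
  have := hDD y.
  rewrite (Dm_v hG hgam hp hgp horb (RLr _ hrb) pv) (Dm_v hG hgam hp hgp horb (RLr _ hra) pv).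
  rewrite (Dm_v hG hgam hp hgp horb (RLr _ hra) (fixout_pres hba hob pv)).
  by rewrite (Dm_v hG hgam hp hgp horb (RLr _ hrb) (fixout_pres haa hoa pv)).
case: (classic (valid m y)) => hvy; last by rewrite !(aut_fix haa hvy) (aut_fix hba hvy) (aut_fix haa hvy).
by rewrite (hob y hvy pv) (hoa y hvy pv) (hob y hvy pv).
Qed.
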